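(* Let $n\ge 3$ and let $x_1,x_2,x_3,x_4$ be distinct vertices of $H_2(n,n-1)$ such that $x_1\sim x_2$, $x_2\sim x_3$, $x_3\sim x_4$ and $x_4\sim x_1$. Then $x_1+x_2=x_3+x_4$ and $x_1+x_4=x_2+x_3$.
   Context: $H_2(n,n-1)$ is the simple undirected graph with vertex set $\mathbb{Z}_2^n$ in which $x\sim y$ (adjacent) iff their Hamming distance $|\{i:x_i\ne y_i\}|$ is at least $n-1$. Addition is in $\mathbb{Z}_2^n$. *)

(* Defs.v *)
From mathcomp Require Import all_boot.
Set Implicit Arguments. Unset Strict Implicit. Unset Printing Implicit Defensive.

(* Vertices of H_2(n,n-1): Z_2^n, represented as boolean vectors of length n. *)
Definition vtx (n : nat) := {ffun 'I_n -> bool}.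

Definition vadd (n : nat) (x y : vtx n) : vtx n := [ffun i => x i (+) y i].

Definition hdist (n : nat) (x y : vtx n) : nat := #|[set i | x i != y i]|.

(* Adjacency in H_2(n,n-1): Hamming distance at least n-1 (simple graph, so x != y). *)
Definition hadj (n : nat) (x y : vtx n) : bool := (x != y) && (n.-1 <= hdist x y).

(* Main.v *)
Require Import Defs.
From mathcomp Require Import all_boot zify.

Lemma agree_unique n (x y : vtx n) i j :
  hadj x y -> x i = y i -> x j = y j -> i = j.
Proof.
move=> /andP[_ H] xi xj; apply/eqP; apply/negPn/negP => ne.
have sub : [set k | x k != y k] \subset ~: [set i; j].
  apply/subsetP => k; rewrite !inE => /eqP nk.
  by apply/negP => /orP[] /eqP e; apply: nk; rewrite e.
have := subset_leq_card sub; rewrite [#|~: [set i; j]|]cardsCs setCK cards2 ne card_ord.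
move: H; rewrite /hdist => H1 H2.
have := leq_trans H1 H2.
have : 1 < n.
  have := ltn_ord i; have := ltn_ord j; have : (i : nat) != j by [].
  lia.
lia.
Qed.

Arguments agree_unique {n x y i j}.

Lemma bad n (x y z : vtx n) i :
  hadj x y -> hadj y z -> x != z -> x i = y i -> y i = z i -> False.
Proof.
move=> hxy hyz /negP nxz H0 H1; apply: nxz; apply/eqP/ffunP => j.
case: (eqVneq j i) => [->|ne]; first by rewrite H0 H1.
have A : x j != y j by apply/negP => /eqP e; move: ne; rewrite (agree_unique hxy H0 e) eqxx.
have B : y j != z j by apply/negP => /eqP e; move: ne; rewrite (agree_unique hyz H1 e) eqxx.
by move: A B; case: (x j); case: (y j); case: (z j).
Qed.

Arguments bad {n x y z} i.

Theorem lemma5p4 (n : nat) (x1 x2 x3 x4 : vtx n) :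
  3 <= n ->
  uniq [:: x1; x2; x3; x4] ->
  hadj x1 x2 -> hadj x2 x3 -> hadj x3 x4 -> hadj x4 x1 ->
  vadd x1 x2 = vadd x3 x4 /\ vadd x1 x4 = vadd x2 x3.
Proof.
move=> _ U h12 h23 h34 h41.
have n13 : x1 != x3 by apply/negP => /eqP e; move: U; rewrite e /= !inE eqxx !orbT.
have n31 : x3 != x1 by rewrite eq_sym.
have n24 : x2 != x4 by apply/negP => /eqP e; move: U; rewrite e /= !inE eqxx !orbT andbF.
have n42 : x4 != x2 by rewrite eq_sym.
split; apply/ffunP => i; rewrite !ffunE;
  case E1: (x1 i); case E2: (x2 i); case E3: (x3 i); case E4: (x4 i) => //=;
  first [ exfalso; apply: (bad i h12 h23 n13); by rewrite ?E1 ?E2 ?E3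
        | exfalso; apply: (bad i h23 h34 n24); by rewrite ?E4 ?E2 ?E3
        | exfalso; apply: (bad i h34 h41 n31); by rewrite ?E1 ?E4 ?E3
        | exfalso; apply: (bad i h41 h12 n42); by rewrite ?E1 ?E2 ?E4 ].
Qed.
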